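(* Let $K$ and $L$ be fields and let $\sigma_1,\ldots,\sigma_n\colon K\to L$ be field monomorphisms. Suppose that $$\sum_{g\in S_n}\prod_{i=1}^n\sigma_{g(i)}(x_i)=0\quad\text{for all }x_1,\ldots,x_n\in K.$$ Then $\operatorname{char}K=p>0$ and there exist indices $1\le i_1<\cdots<i_p\le n$ with $\sigma_{i_1}=\cdots=\sigma_{i_p}$. *)

(* Defs.v *)
From HB Require Import structures.
From mathcomp Require Import all_boot all_order all_algebra all_fingroup.
Set Implicit Arguments. Unset Strict Implicit. Unset Printing Implicit Defensive.

(* Main.v *)
Require Import Defs.
From mathcomp Require Import all_boot all_order all_algebra all_fingroup all_solvable.
From Stdlib Require Import ClassicalEpsilon Classical.
From mathcomp Require Import ring.
Import GRing.Theory.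
Local Open Scope ring_scope.

Definition peqb (P : Prop) : bool := if excluded_middle_informative P then true else false.
Lemma peqbP P : reflect P (peqb P).
Proof. by rewrite /peqb; case: excluded_middle_informative => h; constructor. Qed.

Lemma sorted_enum_ord n (O : {set 'I_n}) : sorted (fun a b : 'I_n => (a < b)%N) (enum O).
Proof.
rewrite /enum_mem -enumT; apply: sorted_filter.
  by move=> a b c; apply: ltn_trans.
have := iota_ltn_sorted 0 n; rewrite -val_enum_ord sorted_map //.
Qed.

Lemma dedekind_distinct (L : fieldType) (M : Type) (mu : M -> M -> M) (e : M)
  (I : finType) (chi : I -> M -> L)
  (Hm : forall i x y, chi i (mu x y) = chi i x * chi i y) (He : forall i, chi i e = 1)
  (S : {set I}) (a : I -> L) :
  {in S &, forall i j, i != j -> exists y, chi i y != chi j y} ->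
  (forall x, \sum_(i in S) a i * chi i x = 0) -> forall i, i \in S -> a i = 0.
Proof.
have [N] := ubnP #|S|; elim: N S a => // N IH S a ltSN Hd Hr i iS.
case: (pickP [pred k in S | k != i]) => [k /andP[kS nki]|none].
  have [y hy] : exists y, chi i y != chi k y by apply: Hd; rewrite // eq_sym.
  pose b j := a j * (chi j y - chi k y).
  have Hb : forall x, \sum_(j in S :\ k) b j * chi j x = 0.
    move=> x.
    have : \sum_(j in S) b j * chi j x = 0.
      rewrite /b.
      transitivity (\sum_(j in S) a j * chi j (mu y x) - chi k y * \sum_(j in S) a j * chi j x).
        rewrite mulr_sumr -sumrB; apply: eq_bigr => j _; rewrite Hm; ring.
      by rewrite !Hr mulr0 subr0.
    rewrite (bigD1 k) //= /b subrr mulr0 mul0r add0r; apply: etrans.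
    by apply: eq_bigl => j; rewrite !inE andbC.
  have bi : b i = 0.
    apply: (IH (S :\ k) b _ _ Hb i).
    - by rewrite (cardsD1 k S) kS in ltSN.
    - by move=> u v; rewrite !inE => /andP[_ uS] /andP[_ vS]; apply: Hd.
    - by rewrite !inE iS andbT eq_sym.
  by move/eqP: bi; rewrite /b mulf_eq0 subr_eq0 (negbTE hy) orbF => /eqP.
have := Hr e; rewrite (bigD1 i) //= big1 ?He ?addr0 ?mulr1 //.
move=> j /andP[jS nji]; have := none j; rewrite /= jS nji //.
Qed.

Lemma dedekind_grouped (L : fieldType) (M : Type) (mu : M -> M -> M) (e : M)
  (I : finType) (chi : I -> M -> L)
  (Hm : forall i x y, chi i (mu x y) = chi i x * chi i y) (He : forall i, chi i e = 1)
  (a : I -> L) :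
  (forall x, \sum_i a i * chi i x = 0) ->
  forall j, \sum_(i | peqb (chi i =1 chi j)) a i = 0.
Proof.
move=> Hr j.
pose r i j := peqb (chi i =1 chi j).
have rP : forall i j, reflect (chi i =1 chi j) (r i j) := fun i j => peqbP _.
pose rep i := odflt i [pick k | r k i].
have rep_r i : chi (rep i) =1 chi i.
  by rewrite /rep; case: pickP => [k /rP //|/= _].
have rep_eq i k : chi i =1 chi k -> rep i = rep k.
  move=> h; rewrite /rep (@eq_pick _ [pred u | r u i] [pred u | r u k]) //.
    have rkk : r k k by apply/rP.
    by case: pickP => //= /(_ k) /= h0; move: rkk; rewrite /= h0.
  by move=> u /=; apply/rP/rP => h' x; rewrite h' ?h // -h.
have rep_rep i : rep (rep i) = rep i := rep_eq _ _ (rep_r i).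
pose S := rep @: [set: I].
pose A c := \sum_(i | rep i == c) a i.
have HS x : \sum_(c in S) A c * chi c x = 0.
  transitivity (\sum_i a i * chi i x); last exact: Hr.
  rewrite [RHS](partition_big rep (mem S)) /=; last by move=> i _; apply: imset_f; rewrite inE.
  apply: eq_bigr => c cS; rewrite /A mulr_suml.
  by apply: eq_big => [i //|i /eqP <-]; rewrite rep_r.
have Hd : {in S &, forall c d, c != d -> exists y, chi c y != chi d y}.
  move=> c d /imsetP[i _ ->] /imsetP[k _ ->] ne.
  apply: NNPP => hn; move/negP: ne; apply; apply/eqP.
  rewrite -(rep_rep i) -(rep_rep k); apply: rep_eq => x.
  case: (eqVneq (chi (rep i) x) (chi (rep k) x)) => // hx.
  by exfalso; apply: hn; exists x.
have := @dedekind_distinct L M mu e I chi Hm He S A Hd HS (rep j) (_ : rep j \in S).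
rewrite /A => H; have {}H := H (imset_f _ (in_setT j)).
apply: etrans H; apply: eq_bigl => i; apply/rP/eqP => [h|h]; first exact: rep_eq.
by move=> x; rewrite -(rep_r i) h (rep_r j).
Qed.

Theorem lemma3p1 (K L : fieldType) (n : nat) (sigma : 'I_n -> {rmorphism K -> L})
  (Hsum : forall x : 'I_n -> K,
     \sum_(g : 'S_n) \prod_(i < n) sigma (g i) (x i) = 0) :
  exists p : nat, [/\ prime p, p \in [pchar K] &
    exists s : 'I_p -> 'I_n,
      (forall j k : 'I_p, (j < k)%N -> (s j < s k)%N) /\
      (forall j k : 'I_p, sigma (s j) =1 sigma (s k))].
Proof.
pose chi (g : 'S_n) (x : 'I_n -> K) := \prod_(i < n) sigma (g i) (x i).
have HD := @dedekind_grouped L ('I_n -> K) (fun x y i => x i * y i) (fun _ => 1)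
  _ chi _ _ (fun _ => 1) _ (1%g).
have {HD} HD : \sum_(g | peqb (chi g =1 chi 1%g)) (1 : L) = 0.
  apply: HD.
  - by move=> g x y; rewrite /chi -big_split; apply: eq_bigr => i _; rewrite rmorphM.
  - by move=> g; rewrite /chi big1 // => i _; rewrite rmorph1.
  - move=> x; transitivity (\sum_(g : 'S_n) chi g x); last exact: Hsum.
    by apply: eq_bigr => g _; rewrite mul1r.
pose H := [set g : 'S_n | [forall i, peqb (sigma (g i) =1 sigma i)]].
have inH (g : 'S_n) : reflect (forall i, sigma (g i) =1 sigma i) (g \in H).
  rewrite inE; apply: (iffP forallP) => h i; first exact/peqbP.
  exact/peqbP.
have chiH (g : 'S_n) : peqb (chi g =1 chi 1%g) = (g \in H).
  apply/peqbP/inH => [h i t|h x].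
    have := h (fun k => if k == i then t else 1).
    rewrite /chi (bigD1 i) //= big1 ?mulr1; last first.
      by move=> k /negbTE ->; rewrite rmorph1.
    rewrite (bigD1 i) //= big1 ?mulr1 ?eqxx ?perm1 //.
    by move=> k /negbTE ->; rewrite rmorph1.
  by rewrite /chi; apply: eq_bigr => i _; rewrite perm1 h.
have {HD} HN : (#|H|%:R : L) = 0.
  by rewrite -HD -sumr_const; apply: eq_bigl => g; rewrite chiH.
have gH : group_set H.
  apply/group_setP; split; first by apply/inH => i t; rewrite perm1.
  move=> x y /inH hx /inH hy; apply/inH => i t.
  by rewrite permM hy hx.
pose G := Group gH.
have H1 : (1%g : 'S_n) \in H by apply/inH => i t; rewrite perm1.
have [p charp] : exists p, p \in [pchar L].
  apply: (@GRing.natf0_pchar _ #|H|); last by apply/eqP.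
  by apply/card_gt0P; exists 1%g.
have pr := pcharf_prime charp.
have pdiv : (p %| #|G|)%N by rewrite (dvdn_pcharf charp) /= HN.
have [g gG og] := Cauchy pr pdiv.
have [i gi] : exists i, g i != i.
  case: (pickP [pred i | g i != i]) => [i gi|none]; first by exists i.
  have g1 : g = 1%g.
    by apply/permP => i; rewrite perm1; apply/eqP; have := none i; move/negbFE.
  by move: og; rewrite g1 order1 => p1; rewrite -p1 in pr.
exists p; split => //.
  apply/andP; split => //.
  by rewrite -(fmorph_eq0 (sigma i)) rmorph_nat; apply/eqP; apply: pcharf0.
pose O := orbit 'P <[g]> i.
have Oeq j : j \in O -> sigma j =1 sigma i.
  case/orbitP => h hg <- /=.
  have hG : h \in G by move: hg; apply/subsetP; rewrite cycle_subG.
  by move/inH: hG; rewrite apermE.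
have cO : #|O| = p.
  have d : (#|O| %| p)%N.
    by rewrite card_orbit -og; apply: dvdn_indexg.
  case/orP: ((primeP pr).2 _ d) => /eqP // c1.
  have iO : i \in O := orbit_refl _ _ _.
  have giO : g i \in O by rewrite -apermE; apply: mem_orbit; apply: cycle_id.
  have /cards1P [z Oz] : #|O| == 1%N by rewrite c1.
  by move: iO giO gi; rewrite Oz !inE => /eqP -> /eqP ->; rewrite eqxx.
have sz : size (enum O) = p by rewrite -cardE.
exists (fun j : 'I_p => nth i (enum O) j); split.
  move=> j k jk.
  apply: (sorted_ltn_nth (leT := fun a b : 'I_n => (a < b)%N)) => //.
  - by move=> a b c; apply: ltn_trans.
  - exact: sorted_enum_ord.
  - by rewrite inE sz.
  - by rewrite inE sz.
have nO (j : 'I_p) : nth i (enum O) j \in O.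
  by rewrite -mem_enum mem_nth // sz.
by move=> j k x; rewrite (Oeq _ (nO j)) (Oeq _ (nO k)).
Qed.
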